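(* Let $\{M_n\}_{n\ge 0}$ be the Motzkin numbers, determined by $M_0=M_1=1$ and $(n+3)M_{n+1}=(2n+3)M_n+3nM_{n-1}$ for $n\ge 1$. Then $\{M_n\}_{n\ge 0}$ is log-convex.
   Context: A sequence $a_0,a_1,\ldots$ of nonnegative real numbers is log-convex if $a_{k-1}a_{k+1}\ge a_k^2$ for all $k\ge 1$. *)

(* Defs.v *)
From mathcomp Require Import all_boot all_order all_algebra.
Set Implicit Arguments. Unset Strict Implicit. Unset Printing Implicit Defensive.
Import Order.TTheory GRing.Theory Num.Theory.
Local Open Scope ring_scope.

Definition log_convex (R : numDomainType) (a : nat -> R) : Prop :=
  (forall k, 0 <= a k) /\ (forall k, (1 <= k)%N -> a k ^+ 2 <= a k.-1 * a k.+1).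

Definition motzkin_rec (R : numDomainType) (M : nat -> R) : Prop :=
  M 0%N = 1 /\ M 1%N = 1 /\
  forall n, (1 <= n)%N ->
    (n + 3)%:R * M n.+1 = (2 * n + 3)%:R * M n + (3 * n)%:R * M n.-1.

(* Main.v *)
Require Import Defs.
From mathcomp Require Import all_boot all_order all_algebra.
From mathcomp Require Import ring lra.
Import Order.TTheory GRing.Theory Num.Theory.
Local Open Scope ring_scope.

Lemma step_aux (R : realFieldType) (t x y z : R): 0 <= t -> 0 < x ->
  (6*t+6)*x <= (2*t+5)*y -> (4*t+13)*y <= (12*t+21)*x ->
  (t+4) * z = (2*t+5)*y + 3*(t+1)*x ->
  [/\ 0 < y, (6*(t+1)+6)*y <= (2*(t+1)+5)*z, (4*(t+1)+13)*z <= (12*(t+1)+21)*y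
    & y ^+ 2 <= x * z].
Proof.
move=> t0 x0 h1 h2 hz.
have y0 : 0 < y by nra.
have t4 : 0 < t + 4 by lra.
have e : (t+4) * (x*z) = x * ((2*t+5)*y + 3*(t+1)*x) by rewrite -hz; ring.
split=> //; rewrite ?expr2.
- have : (t+4) * ((6*(t+1)+6)*y) <= (t+4) * ((2*(t+1)+5)*z); last by rewrite ler_pM2l.
  rewrite [X in _ <= X]mulrCA hz; nra.
- have : (t+4) * ((4*(t+1)+13)*z) <= (t+4) * ((12*(t+1)+21)*y); last by rewrite ler_pM2l.
  rewrite [X in X <= _]mulrCA hz; nra.
- have : (t+4) * (y*y) <= (t+4) * (x*z); last by rewrite ler_pM2l.
  rewrite e.
  have a1 : (4*t+13)*(y*y) <= (12*t+21)*(x*y) by rewrite !mulrA ler_pM2r.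
  have a2 : (4*t+19)*y <= (12*t+39)*x.
    have : (4*t+13)*((4*t+19)*y) <= (4*t+13)*((12*t+39)*x); last by rewrite ler_pM2l //; lra.
    have b : (4*t+19)*((4*t+13)*y) <= (4*t+19)*((12*t+21)*x) by rewrite ler_pM2l //; lra.
    nra.
  have a3 : (4*t+19)*(x*y) <= (12*t+39)*(x*x) by nra.
  have : (4*t+13)*((t+4)*(y*y)) <= (4*t+13)*(x * ((2*t+5)*y + 3*(t+1)*x)); last by rewrite ler_pM2l //; lra.
  have c1 : (t+4)*((4*t+13)*(y*y)) <= (t+4)*((12*t+21)*(x*y)) by rewrite ler_pM2l.
  have c2 : (t+1)*((4*t+19)*(x*y)) <= (t+1)*((12*t+39)*(x*x)) by rewrite ler_pM2l //; lra.
  nra.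
Qed.

Lemma rec_R (R : realFieldType) (M : nat -> R) : motzkin_rec M ->
  forall n : nat, (n%:R + 4) * M n.+2 = (2 * n%:R + 5) * M n.+1 + 3 * (n%:R + 1) * M n.
Proof.
case=> _ [_ H] n; have := H n.+1 isT; rewrite /=.
rewrite !natrD !natrM -natr1 => h.
have -> : (n%:R + 4) * M n.+2 = (n%:R + 1 + 3%:R) * M n.+2 by ring.
rewrite h; ring.
Qed.

Lemma inv_M (R : realFieldType) (M : nat -> R) : motzkin_rec M ->
  forall m : nat, let t := (m.+2)%:R : R in
  [/\ 0 < M m.+2, (6*t+6)* M m.+2 <= (2*t+5)* M m.+3 & (4*t+13)* M m.+3 <= (12*t+21)* M m.+2].
Proof.
move=> HM; have Hr := @rec_R R M HM; case: (HM) => M0 [M1 _].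
have M2 : M 2%N = 2 by have := Hr 0%N; rewrite M0 M1; lra.
have M3 : M 3%N = 4 by have := Hr 1%N; rewrite M1 M2; lra.
elim=> [|m [p1 p2 p3]] /=.
  rewrite M2 M3; split; lra.
have t0 : 0 <= (m.+2)%:R :> R by [].
have hz := Hr m.+2.
have [q0 q1 q2 q3] := @step_aux R _ _ _ _ t0 p1 p2 p3 hz.
rewrite -[(m.+3)%:R]natr1; split=> //; lra.
Qed.

Theorem corollary3p3 (R : realFieldType) (M : nat -> R) :
  motzkin_rec M -> log_convex M.
Proof.
move=> HM; have Hr := @rec_R R M HM; have Hi := @inv_M R M HM.
case: (HM) => M0 [M1 _].
have M2 : M 2%N = 2 by have := Hr 0%N; rewrite M0 M1; lra.
have M3 : M 3%N = 4 by have := Hr 1%N; rewrite M1 M2; lra.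
split.
  case=> [|[|m]]; rewrite ?M0 ?M1 //; by case: (Hi m) => /ltW.
case=> [|[|[|m]]] // _ /=.
- by rewrite M0 M1 M2; lra.
- by rewrite M1 M2 M3; lra.
case: (Hi m) => p1 p2 p3.
have t0 : 0 <= (m.+2)%:R :> R by [].
by have [] := @step_aux R _ _ _ _ t0 p1 p2 p3 (Hr m.+2).
Qed.
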